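(* Let $p_1$ and $p_2$ be probability densities on $\mathbb{R}^n$ and $\omega\in[0,1]$. Define the unnormalized harmonic mean $\mathcal{M}^h_\omega\{p_1,p_2\}(\mathbf{x})=\frac{p_1(\mathbf{x})p_2(\mathbf{x})}{(1-\omega)p_1(\mathbf{x})+\omega p_2(\mathbf{x})}$, its normalization constant $\zeta^h=\int_{\mathbb{R}^n}\mathcal{M}^h_\omega\{p_1,p_2\}(\mathbf{x})\,d\mathbf{x}$ (assumed positive), and the harmonic mean density $\mathbf{M}^h_\omega\{p_1,p_2\}=\mathcal{M}^h_\omega\{p_1,p_2\}/\zeta^h$. Then for every $\mathbf{x}\in\mathbb{R}^n$, \[ \min\{p_1(\mathbf{x}),p_2(\mathbf{x})\}\le \mathbf{M}^h_\omega\{p_1,p_2\}(\mathbf{x}), \] i.e. the harmonic mean density is bounded from below by the pointwise minimum of the component densities.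
   Context: The quotient defining $\mathcal{M}^h_\omega$ is taken to be $0$ at points where its numerator vanishes. *)

(* Defs.v *)
From HB Require Import structures.
From mathcomp Require Import all_boot all_order all_algebra.
From mathcomp Require Import all_classical all_reals all_analysis.
Set Implicit Arguments. Unset Strict Implicit. Unset Printing Implicit Defensive.
Import Order.TTheory GRing.Theory Num.Theory.
Local Open Scope classical_set_scope.
Local Open Scope ring_scope.

Definition is_density (d : measure_display) (T : measurableType d) (R : realType)
  (mu : {measure set T -> \bar R}) (p : T -> R) : Prop :=
  [/\ measurable_fun [set: T] p,
      (forall x, 0 <= p x) &
      (\int[mu]_x (p x)%:E = 1)%E].

Definition hmean_unnorm (T : Type) (R : realType) (w : R) (p1 p2 : T -> R) (x : T) : R :=
  if p1 x * p2 x == 0 then 0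
  else p1 x * p2 x / ((1 - w) * p1 x + w * p2 x).

Definition hmean_zeta (d : measure_display) (T : measurableType d) (R : realType)
  (mu : {measure set T -> \bar R}) (w : R) (p1 p2 : T -> R) : \bar R :=
  (\int[mu]_x (hmean_unnorm w p1 p2 x)%:E)%E.

Definition hmean_density (d : measure_display) (T : measurableType d) (R : realType)
  (mu : {measure set T -> \bar R}) (w : R) (p1 p2 : T -> R) (x : T) : R :=
  hmean_unnorm w p1 p2 x / fine (hmean_zeta mu w p1 p2).

(* Main.v *)
Require Import Defs.
From HB Require Import structures.
From mathcomp Require Import all_boot all_order all_algebra.
From mathcomp Require Import all_classical all_reals all_analysis.
From mathcomp Require Import lra measurable_realfun.
Import Order.TTheory GRing.Theory Num.Theory.
Local Open Scope classical_set_scope.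
Local Open Scope ring_scope.

Lemma inv_meas (R : realType) : measurable_fun setT (@GRing.inv R).
Proof.
have -> : GRing.inv = (fun x : R => if x == 0 then 0 else x^-1).
  by apply/funext => x; case: eqP => [->|]; rewrite ?invr0.
apply: measurable_fun_if => //.
- by apply: (measurable_fun_eqr (f := id) (g := cst 0)); [exact: measurable_id|exact: measurable_cst].
- rewrite setTI.
  have -> : (fun x : R => x == 0) @^-1` [set false] = [set x | x != 0].
    by apply/seteqP; split => x /=; case: eqP.
  apply: open_continuous_measurable_fun; first exact: open_neq.
  by move=> x; rewrite inE => hx; exact: inv_continuous.
Qed.

Theorem theorem3 (R : realType) (d : measure_display) (T : measurableType d)
  (mu : {measure set T -> \bar R}) (p1 p2 : T -> R) (w : R) :
  is_density mu p1 -> is_density mu p2 ->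
  0 <= w <= 1 ->
  (0 < hmean_zeta mu w p1 p2)%E ->
  forall x : T, Num.min (p1 x) (p2 x) <= hmean_density mu w p1 p2 x.
Proof.
move=> [mp1 p10 ip1] [mp2 p20 ip2] /andP[w0 w1] z0 x.
set H := hmean_unnorm w p1 p2.
have hH y : H y = p1 y * p2 y / ((1 - w) * p1 y + w * p2 y).
  by rewrite /H /hmean_unnorm; case: ifPn => [/eqP->|]; rewrite ?mul0r.
have hD0 y : 0 <= (1 - w) * p1 y + w * p2 y.
  by apply: addr_ge0; apply: mulr_ge0 => //; rewrite subr_ge0.
have hH0 y : 0 <= H y by rewrite hH; apply: divr_ge0 => //; exact: mulr_ge0.
have hHle y : H y <= w * p1 y + (1 - w) * p2 y.
  rewrite hH; have := hD0 y; rewrite le0r => /orP[/eqP->|Dp].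
    by rewrite invr0 mulr0; apply: addr_ge0; apply: mulr_ge0 => //; rewrite subr_ge0.
  rewrite ler_pdivrMr //.
  have h1 : 0 <= w * (1 - w) * (p1 y - p2 y) ^+ 2.
    by apply: mulr_ge0; [apply: mulr_ge0 => //; rewrite subr_ge0|exact: sqr_ge0].
  nra.
have hHmin y : Num.min (p1 y) (p2 y) <= H y.
  have := p10 y; have := p20 y.
  rewrite le0r => /orP[/eqP e2|q2]; first by move=> _; rewrite e2 ge_min hH0 orbT.
  rewrite le0r => /orP[/eqP e1|q1]; first by rewrite e1 ge_min hH0.
  have Dp : 0 < (1 - w) * p1 y + w * p2 y.
    have := hD0 y; rewrite le0r => /orP[/eqP De|//]. nra.
  rewrite hH ler_pdivlMr //.
  have m1 : Num.min (p1 y) (p2 y) <= p1 y by rewrite ge_min lexx.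
  have m2 : Num.min (p1 y) (p2 y) <= p2 y by rewrite ge_min lexx orbT.
  have m0 : 0 <= Num.min (p1 y) (p2 y) by rewrite le_min (ltW q1) (ltW q2).
  move: (Num.min (p1 y) (p2 y)) m1 m2 m0 => m m1 m2 m0.
  case: (leP (p1 y) (p2 y)) => h.
    have : m * ((1 - w) * p1 y + w * p2 y) <= m * p2 y by apply: ler_wpM2l => //; nra.
    nra.
  have : m * ((1 - w) * p1 y + w * p2 y) <= m * p1 y by apply: ler_wpM2l => //; nra.
  nra.
have mH : measurable_fun setT H.
  have -> : H = (fun y => p1 y * p2 y * ((1 - w) * p1 y + w * p2 y)^-1).
    by apply/funext => y; rewrite hH.
  apply: measurable_funM; first exact: measurable_funM.
  apply: (measurableT_comp (inv_meas R)).
  apply: measurable_funD; apply: measurable_funM => //; exact: measurable_cst.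
have zle : (hmean_zeta mu w p1 p2 <= 1)%E.
  rewrite /hmean_zeta -/H.
  apply: (@le_trans _ _ (\int[mu]_y ((w * p1 y)%:E + ((1 - w) * p2 y)%:E))%E).
    apply: ge0_le_integral => //.
    - by move=> y _; rewrite lee_fin.
    - exact/measurable_EFinP.
    - rewrite -/(measurable_fun _ _). apply/measurable_EFinP. apply: measurable_funD; apply: measurable_funM => //; exact: measurable_cst.
    - by move=> y _; rewrite -EFinD lee_fin.
  rewrite ge0_integralD //; first last.
  - by apply/measurable_EFinP; apply: measurable_funM => //; exact: measurable_cst.
  - by move=> y yT; rewrite lee_fin; apply: mulr_ge0 => //; rewrite subr_ge0.
  - by apply/measurable_EFinP; apply: measurable_funM => //; exact: measurable_cst.
  - by move=> y yT; rewrite lee_fin; apply: mulr_ge0.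
  under eq_integral do rewrite EFinM.
  under [X in (_ + X)%E]eq_integral do rewrite EFinM.
  rewrite !ge0_integralZl //.
  - by rewrite ip1 ip2 !mule1 -EFinD addrC subrK.
  - exact/measurable_EFinP.
  - by move=> y yT; rewrite lee_fin.
  - by rewrite lee_fin subr_ge0.
  - exact/measurable_EFinP.
  - by move=> y yT; rewrite lee_fin.
move: z0 zle; rewrite /hmean_density -/H.
case: (hmean_zeta mu w p1 p2) => [z| |] //=; rewrite ?lte_fin ?lee_fin => z0 z1.
rewrite ler_pdivlMr //.
apply: (le_trans _ (hHmin x)).
by rewrite ler_piMr // le_min p10 p20.
Qed.
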